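(* Let $P\in\mathbb{R}^{p\times m}$, $Y_d\in\mathbb{R}^p$, and consider the plant $Y_k=PU_k+N_k$ with tracking error $E_k=Y_d-Y_k$, so that $E_{k+1}=E_k+P\bar U_k+D_k$ with $\bar U_k=-\Delta U_k$, $D_k=-\Delta N_k$. Let $K\in\mathbb{R}^{m\times p}$ and apply the $k$-state feedback $\bar U_k=-KE_k$ for all $k\in\mathbb{Z}_+$ (equivalently, the updating law $U_{k+1}=U_k+KE_k$). Then the resulting closed-loop system is robustly $k$-stable if and only if $\rho(I_p-PK)<1$.
   Context: Notation: $\mathbb{Z}_+=\{0,1,2,\dots\}$. For a sequence $(f_k)_{k\in\mathbb{Z}_+}$, $\Delta f_k=f_{k+1}-f_k$ and $\Delta^2 f_k=\Delta(\Delta f_k)$. $\|\cdot\|$ is a fixed vector norm, $\rho(\cdot)$ the spectral radius. In the plant, $U_k\in\mathbb{R}^m$ is the input, $Y_k\in\mathbb{R}^p$ the output, and $(N_k)_{k\in\mathbb{Z}_+}\subset\mathbb{R}^p$ an unknown bounded (iteration-varying) uncertainty sequence. Define $\beta_{\Delta N}=\sup_{k}\|\Delta N_k\|$ and $\beta^{ess}_{\Delta N}=\limsup_{k\to\infty}\|\Delta N_k\|$. A closed-loop system formed by this plant and an updating law for $U_k$ is called robustly $k$-stable if there exist class-$\mathcal{K}_\infty$ functions $\chi_1,\chi_2$ and a class-$\mathcal{KL}$ function $\zeta$ such that for every bounded initial condition $E_0$ (i.e. every initial input $U_0$) and every bounded uncertainty $(N_k)$ there is a finite bound $\beta_0\ge0$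 (generally depending on the initial condition) with (boundedness) $\|E_k\|\le\chi_1(\beta_{\Delta N})+\zeta(\beta_0,k)$ for all $k\in\mathbb{Z}_+$, and (attractiveness) $\limsup_{k\to\infty}\|E_k\|\le\chi_2(\beta^{ess}_{\Delta N})$. *)

(* Defs.v *)
From HB Require Import structures.
From mathcomp Require Import all_boot all_order all_algebra.
From mathcomp Require Import all_classical all_reals all_analysis.
From mathcomp Require Import complex.
Set Implicit Arguments. Unset Strict Implicit. Unset Printing Implicit Defensive.
Import Order.TTheory GRing.Theory Num.Theory.
Import numFieldNormedType.Exports.
Local Open Scope classical_set_scope.
Local Open Scope ring_scope.

Section Defs.
Variable R : realType.

Definition is_vnorm (p : nat) (nu : 'cV[R]_p -> R) : Prop :=
  [/\ forall x, 0 <= nu x,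
      forall x, nu x = 0 -> x = 0,
      forall (a : R) x, nu (a *: x) = `|a| * nu x &
      forall x y, nu (x + y) <= nu x + nu y].

(* Spectral radius of a real square matrix: the largest modulus of its
   (complex) eigenvalues (sup of an empty set is 0 by convention). *)
Definition spectral_radius (n : nat) (A : 'M[R]_n) : R :=
  sup ((@Normc.normc R) @`
         [set z : R[i] | eigenvalue (map_mx (real_complex R) A) z]).

Definition class_K (f : R -> R) : Prop :=
  [/\ {within [set x : R | 0 <= x], continuous f},
      f 0 = 0 &
      forall x y, 0 <= x -> x < y -> f x < f y].

Definition class_Kinf (f : R -> R) : Prop :=
  class_K f /\ forall M : R, exists x, 0 <= x /\ M < f x.

Definition class_KL (z : R -> nat -> R) : Prop :=
  (forall k, class_K (fun r => z r k)) /\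
  (forall r, 0 <= r ->
     (forall k, z r k.+1 <= z r k) /\ (fun k => z r k) @ \oo --> (0 : R)).

Definition bounded_seq (p : nat) (nu : 'cV[R]_p -> R) (N : nat -> 'cV[R]_p) :=
  exists M : R, forall k, nu (N k) <= M.

Definition dseq (p : nat) (N : nat -> 'cV[R]_p) : nat -> 'cV[R]_p :=
  fun k => N k.+1 - N k.

Definition beta_dN (p : nat) (nu : 'cV[R]_p -> R) (N : nat -> 'cV[R]_p) : R :=
  sup (range (fun k => nu (dseq N k))).

(* beta^ess_{Delta N} = limsup_k ||Delta N_k|| (finite for bounded N) *)
Definition beta_ess_dN (p : nat) (nu : 'cV[R]_p -> R) (N : nat -> 'cV[R]_p) : R :=
  fine (limn_esup (fun k => (nu (dseq N k))%:E)).

Fixpoint cl_input (p m : nat) (P : 'M[R]_(p, m)) (K : 'M[R]_(m, p))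
  (Yd : 'cV[R]_p) (N : nat -> 'cV[R]_p) (U0 : 'cV[R]_m) (k : nat) : 'cV[R]_m :=
  match k with
  | 0 => U0
  | k'.+1 => let U := cl_input P K Yd N U0 k' in
             U + K *m (Yd - (P *m U + N k'))
  end.

Definition cl_error (p m : nat) (P : 'M[R]_(p, m)) (K : 'M[R]_(m, p))
  (Yd : 'cV[R]_p) (N : nat -> 'cV[R]_p) (U0 : 'cV[R]_m) (k : nat) : 'cV[R]_p :=
  Yd - (P *m cl_input P K Yd N U0 k + N k).

Definition robustly_k_stable (p m : nat) (nu : 'cV[R]_p -> R)
  (P : 'M[R]_(p, m)) (K : 'M[R]_(m, p)) (Yd : 'cV[R]_p) : Prop :=
  exists (chi1 chi2 : R -> R) (zeta : R -> nat -> R),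
    [/\ class_Kinf chi1, class_Kinf chi2, class_KL zeta &
    forall (U0 : 'cV[R]_m) (N : nat -> 'cV[R]_p), bounded_seq nu N ->
      exists beta0 : R, 0 <= beta0 /\
        (forall k, nu (cl_error P K Yd N U0 k)
                     <= chi1 (beta_dN nu N) + zeta beta0 k) /\
        (limn_esup (fun k => (nu (cl_error P K Yd N U0 k))%:E)
           <= (chi2 (beta_ess_dN nu N))%:E)%E].
End Defs.

(* Main.v *)
Require Import Defs.
From HB Require Import structures.
From mathcomp Require Import all_boot all_order all_algebra.
From mathcomp Require Import all_classical all_reals all_analysis.
From mathcomp Require Import complex.
From mathcomp Require Import ring lra zify.
Import Order.TTheory GRing.Theory Num.Theory.
Import numFieldNormedType.Exports.
Local Open Scope ring_scope.
Local Open Scope classical_set_scope.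
Set Warnings "-all".
Set Implicit Arguments. Unset Strict Implicit. Unset Printing Implicit Defensive.

Definition mm (R : realType) a b (M : 'M[R]_(a, b)) : R :=
  \sum_i \sum_j `|M i j|.
Arguments mm {R a b}.

Lemma mm_ge0 (R : realType) a b (M : 'M[R]_(a, b)) : 0 <= mm M.
Proof. by apply: sumr_ge0 => i _; apply: sumr_ge0 => j _. Qed.

Lemma mm_entry (R : realType) a b (M : 'M[R]_(a, b)) i j : `|M i j| <= mm M.
Proof.
rewrite /mm (bigD1 i) //= (bigD1 j) //= -addrA lerDl.
by apply: addr_ge0; apply: sumr_ge0 => *; [|apply: sumr_ge0] .
Qed.

Lemma mmD (R : realType) a b (M N : 'M[R]_(a, b)) : mm (M + N) <= mm M + mm N.
Proof.
rewrite /mm -big_split /=; apply: ler_sum => i _.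
rewrite -big_split /=; apply: ler_sum => j _; rewrite mxE; exact: ler_normD.
Qed.

Lemma mmZ (R : realType) a b (c : R) (M : 'M[R]_(a, b)) : mm (c *: M) = `|c| * mm M.
Proof.
rewrite /mm mulr_sumr; apply: eq_bigr => i _; rewrite mulr_sumr.
by apply: eq_bigr => j _; rewrite mxE normrM.
Qed.

Lemma mmN (R : realType) a b (M : 'M[R]_(a, b)) : mm (- M) = mm M.
Proof. by rewrite -scaleN1r mmZ normrN normr1 mul1r. Qed.

Lemma mm0 (R : realType) a b : mm (0 : 'M[R]_(a, b)) = 0.
Proof. by rewrite -(scale0r (0 : 'M[R]_(a,b))) mmZ normr0 mul0r. Qed.

Lemma mm_eq0 (R : realType) a b (M : 'M[R]_(a, b)) : mm M = 0 -> M = 0.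
Proof.
move=> h; apply/matrixP => i j; rewrite mxE; apply/normr0_eq0.
by apply/le_anti; rewrite normr_ge0 -h mm_entry.
Qed.

Lemma mm_tr (R : realType) a b (M : 'M[R]_(a, b)) : mm M^T = mm M.
Proof.
rewrite /mm exchange_big; apply: eq_bigr => i _; apply: eq_bigr => j _.
by rewrite mxE.
Qed.

Lemma mmM (R : realType) a b c (M : 'M[R]_(a, b)) (N : 'M[R]_(b, c)) :
  mm (M *m N) <= mm M * mm N.
Proof.
rewrite /mm mulr_suml; apply: ler_sum => i _.
rewrite mulr_suml.
apply: (@le_trans _ _ (\sum_k \sum_j `|M i j| * `|N j k|)).
  apply: ler_sum => k _; rewrite mxE.
  apply: (le_trans (ler_norm_sum _ _ _)); apply: ler_sum => j _.
  by rewrite normrM.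
rewrite exchange_big /=; apply: ler_sum => j _.
rewrite -mulr_sumr; apply: ler_wpM2l => //.
rewrite (bigD1 j) //= lerDl; apply: sumr_ge0 => *; apply: sumr_ge0 => *.
by [].
Qed.

Lemma mm_sum (R : realType) a b (I : Type) (r : seq I) (F : I -> 'M[R]_(a, b)) :
  mm (\sum_(i <- r) F i) <= \sum_(i <- r) mm (F i).
Proof.
apply: (big_rec2 (fun x y => mm y <= x)); first by rewrite mm0.
move=> i y1 y2 _ h; by rewrite (le_trans (mmD _ _)) // lerD2l.
Qed.

Lemma nu0 (R : realType) p (nu : 'cV[R]_p -> R) : is_vnorm nu -> nu 0 = 0.
Proof.
case=> _ _ hZ _; by rewrite -(scale0r (0 : 'cV[R]_p)) hZ normr0 mul0r.
Qed.

Lemma nuN (R : realType) p (nu : 'cV[R]_p -> R) x : is_vnorm nu -> nu (- x) = nu x.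
Proof. case=> _ _ hZ _; by rewrite -scaleN1r hZ normrN normr1 mul1r. Qed.

Lemma nu_sum (R : realType) p (nu : 'cV[R]_p -> R) (I : Type) (r : seq I) F :
  is_vnorm nu -> nu (\sum_(i <- r) F i) <= \sum_(i <- r) nu (F i).
Proof.
move=> hnu; apply: (big_rec2 (fun x y => nu y <= x)); first by rewrite nu0.
case: hnu => _ _ _ hD.
by move=> i y1 y2 _ h; rewrite (le_trans (hD _ _)) // lerD2l.
Qed.

Lemma nu_lip (R : realType) p (nu : 'cV[R]_p -> R) x y :
  is_vnorm nu -> `|nu x - nu y| <= nu (x - y).
Proof.
move=> hnu; have [_ _ _ hD] := hnu.
rewrite ler_norml; apply/andP; split.
  have := hD (y - x) x; rewrite subrK -opprB nuN //; lra.
have := hD (x - y) y; rewrite subrK; lra.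
Qed.

Lemma nu_pos (R : realType) p (nu : 'cV[R]_p -> R) x :
  is_vnorm nu -> x != 0 -> 0 < nu x.
Proof.
case=> h0 heq _ _ hx; rewrite lt_neqAle h0 andbT; apply/eqP => /esym/heq.
by move/eqP: hx.
Qed.

Lemma nu_upper (R : realType) p (nu : 'cV[R]_p -> R) :
  is_vnorm nu -> exists2 c, 0 < c & forall x, nu x <= c * mm x.
Proof.
move=> hnu; have [h0 _ hZ _] := hnu.
pose c := \sum_(i < p) nu (delta_mx i 0) + 1.
have c0 : 0 < c by rewrite /c ltr_wpDl // sumr_ge0.
exists c => // x.
rewrite {1}(matrix_sum_delta x).
apply: (le_trans (nu_sum _ _ hnu)).
rewrite /mm mulr_sumr; apply: ler_sum => i _.
rewrite !big_ord1 hZ mulrC ler_wpM2r //.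
rewrite /c (bigD1 i) //= -addrA lerDl addr_ge0 // sumr_ge0 //.
Qed.

Lemma entry_le_norm (R : realType) a b (M : 'M[R]_(a, b)) i j : `|M i j| <= `|M|.
Proof.
rewrite [leRHS]/Num.norm /= mx_normrE; apply/bigmax_geP; right => /=.
by exists (i, j).
Qed.

Lemma norm_le_mm (R : realType) a b (M : 'M[R]_(a, b)) : `|M| <= mm M.
Proof.
rewrite [leLHS]/Num.norm /= mx_normrE; apply: bigmax_le; first exact: mm_ge0.
by move=> [i j] _; exact: mm_entry.
Qed.

Lemma mm_le_norm (R : realType) a b (M : 'M[R]_(a, b)) : mm M <= (a * b)%:R * `|M|.
Proof.
apply: (@le_trans _ _ (\sum_(i < a) \sum_(j < b) `|M|)).
  by apply: ler_sum => i _; apply: ler_sum => j _; exact: entry_le_norm.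
rewrite big_const_ord iter_addr addr0 big_const_ord iter_addr addr0.
by rewrite -mulrnA mulr_natl mulnC.
Qed.

Lemma lip_cont (R : realType) a b (f : 'M[R]_(a, b) -> R) L :
  (forall x y, `|f x - f y| <= L * `|x - y|) -> continuous f.
Proof.
move=> hL x A /nbhs_ballP [e e0 hA].
have L1 : 0 < `|L| + 1 by rewrite ltr_wpDl.
apply/nbhs_ballP; exists (e / (`|L| + 1)); first by rewrite /= divr_gt0.
move=> y; rewrite -ball_normE /= => hy; apply: hA; rewrite -ball_normE /=.
apply: (le_lt_trans (hL x y)).
apply: (@le_lt_trans _ _ ((`|L| + 1) * `|x - y|)).
  by apply: ler_wpM2r => //; rewrite (le_trans (ler_norm L)) // lerDl.
by rewrite mulrC -ltr_pdivlMr.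
Qed.

Lemma mm_delta (R : realType) a b (i : 'I_a) (j : 'I_b) :
  mm (delta_mx i j : 'M[R]_(a, b)) = 1.
Proof.
rewrite /mm (bigD1 i) //= (bigD1 j) //= mxE !eqxx normr1.
rewrite big1 ?addr0; last by move=> k /negbTE hk; rewrite mxE eqxx hk normr0.
rewrite big1 ?addr0 // => k /negbTE hk; rewrite big1 // => l _.
by rewrite mxE hk normr0.
Qed.

Lemma nu_lower (R : realType) p (nu : 'cV[R]_p -> R) :
  is_vnorm nu -> exists2 c, 0 < c & forall x, mm x <= c * nu x.
Proof.
case: p nu => [|p] nu hnu.
  exists 1 => // x; rewrite /mm big_ord0 mul1r; by case: hnu.
have [c2 c2pos hup] := nu_upper hnu.
pose g (r : 'rV[R]_p.+1) := nu r^T.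
pose S := [set r : 'rV[R]_p.+1 | mm r = 1].
have S0 : S !=set0 by exists (delta_mx 0 0); rewrite /S /= mm_delta.
have gL : forall r s, `|g r - g s| <= (c2 * (1 * p.+1)%:R) * `|r - s|.
  move=> r s; apply: (le_trans (nu_lip _ _ hnu)).
  rewrite -linearB /= (le_trans (hup _)) // mm_tr -mulrA ler_wpM2l //.
  exact: ltW. exact: mm_le_norm.
have mL : forall r s : 'rV[R]_p.+1, `|mm r - mm s| <= (1 * p.+1)%:R * `|r - s|.
  move=> r s; apply: (@le_trans _ _ (mm (r - s))); last exact: mm_le_norm.
  rewrite ler_norml; apply/andP; split.
    have := mmD (s - r) r; rewrite subrK -opprB mmN; lra.
  have := mmD (r - s) s; rewrite subrK; lra.
have gc : continuous g by apply: lip_cont gL.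
have mc : continuous (@mm R 1 p.+1) by apply: lip_cont mL.
have Scl : closed S.
  apply: (@preimage_closed _ _ (@mm R 1 p.+1) [set x | x = 1]).
    by move=> x _; apply: mc.
  exact: closed_eq.
have Sb : bounded_set S.
  exists 1; split; first by rewrite num_real.
  move=> M M1 r /= Sr; rewrite (le_trans (norm_le_mm r)) // Sr; exact: ltW.
have Sc : compact S by apply: bounded_closed_compact.
have [c cS cmin] := EVT_min_rV S0 Sc (continuous_subspaceT gc).
have gpos : 0 < g c.
  apply: nu_pos => //; apply/eqP => /(congr1 trmx); rewrite trmxK trmx0 => c0.
  by move: cS; rewrite inE /S /= c0 mm0 => /eqP; rewrite eq_sym oner_eq0.
exists (g c)^-1; first by rewrite invr_gt0.
move=> x; have [->|x0] := eqVneq x 0; first by rewrite mm0 nu0 // mulr0.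
have mx0 : 0 < mm x.
  by rewrite lt_neqAle mm_ge0 andbT; apply/eqP => /esym/mm_eq0; apply/eqP.
have rS : ((mm x)^-1 *: x^T) \in S.
  by rewrite inE /S /= mmZ mm_tr ger0_norm ?invr_ge0 ?mulVf ?ltW // gt_eqF.
have := cmin _ rS; rewrite /g linearZ /= trmxK.
case: hnu => _ _ hZ _; rewrite hZ ger0_norm; last by rewrite invr_ge0 ltW.
rewrite ler_pdivlMl // => h; rewrite ler_pdivlMl // mulrC.
exact: h.
Qed.

Definition tz (R : realType) (a : nat -> R) :=
  forall e, 0 < e -> exists N, forall k, (N <= k)%N -> a k <= e.

Lemma tz_le (R : realType) (a b : nat -> R) :
  (forall k, b k <= a k) -> tz a -> tz b.
Proof.
move=> hab ha e e0; have [N hN] := ha e e0; exists N => k hk.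
exact: le_trans (hab k) (hN k hk).
Qed.

Lemma tz_add (R : realType) (a b : nat -> R) :
  tz a -> tz b -> tz (fun k => a k + b k).
Proof.
move=> ha hb e e0.
have e2 : 0 < e / 2 by rewrite divr_gt0.
have [N1 h1] := ha _ e2; have [N2 h2] := hb _ e2.
exists (maxn N1 N2) => k hk.
have := h1 k (leq_trans (leq_maxl _ _) hk).
have := h2 k (leq_trans (leq_maxr _ _) hk).
lra.
Qed.

Lemma tz_scale (R : realType) (c : R) (a : nat -> R) :
  0 <= c -> tz a -> tz (fun k => c * a k).
Proof.
move=> c0 ha e e0.
have c1 : 0 < c + 1 by lra.
have [N hN] := ha (e / (c + 1)) (divr_gt0 e0 c1).
exists N => k hk.
apply: (le_trans (ler_wpM2l c0 (hN k hk))).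
rewrite mulrA ler_pdivrMr //; nra.
Qed.

Lemma tz_0 (R : realType) : tz (fun _ => 0 : R).
Proof. by move=> e e0; exists 0%N => k _; apply: ltW. Qed.

Lemma tz_sum (R : realType) (I : Type) (r : seq I) (a : I -> nat -> R) :
  (forall i, tz (a i)) -> tz (fun k => \sum_(i <- r) a i k).
Proof.
move=> ha; elim: r => [|i r IH].
  by apply: (tz_le _ (@tz_0 R)) => k; rewrite big_nil.
apply: (tz_le _ (tz_add (ha i) IH)) => k; by rewrite big_cons.
Qed.

Lemma tz_cvg (R : realType) (u : nat -> R) : u @ \oo --> 0 -> tz u.
Proof.
move=> /cvgrPdist_lt hu e e0; have [N _ hN] := hu e e0.
exists N => k hk; have := hN k hk; rewrite sub0r normrN => h.
exact: ltW (le_lt_trans (ler_norm _) h).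
Qed.

Lemma tz_geom (R : realType) (q : R) : 0 <= q < 1 -> tz (fun k => q ^+ k).
Proof.
move=> /andP [q0 q1]; apply: tz_cvg; apply: cvg_expr.
by rewrite ger0_norm.
Qed.

Lemma tz_rec (R : realType) (q : R) (a r : nat -> R) :
  0 <= q < 1 -> (forall k, 0 <= a k) -> (forall k, a k.+1 <= q * a k + r k) ->
  tz r -> tz a.
Proof.
move=> /andP [q0 q1] a0 hrec hr e e0.
have e2 : 0 < e / 2 by rewrite divr_gt0.
have q1' : 0 < 1 - q by lra.
have [N hN] := hr (e / 2 * (1 - q)) (mulr_gt0 e2 q1').
have claim : forall t, a (N + t)%N <= q ^+ t * a N + e / 2.
  elim=> [|t IH]; first by rewrite addn0 expr0 mul1r lerDl ltW.
  rewrite addnS (le_trans (hrec _)) //.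
  have := hN (N + t)%N (leq_addr _ _).
  have := ler_wpM2l q0 IH.
  rewrite exprS; nra.
have hg : tz (fun k => q ^+ k) by apply: tz_geom; rewrite q0 q1.
have [T hT] := tz_scale (a0 N) hg e2.
exists (N + T)%N => k hk.
have -> : k = (N + (k - N))%N by rewrite subnKC // (leq_trans (leq_addr T N)).
apply: (le_trans (claim _)).
have : (T <= k - N)%N by rewrite leq_subRL // (leq_trans (leq_addr T N)).
move=> /hT; rewrite mulrC; lra.
Qed.

Lemma normc_ge0 (R : realType) (z : R[i]) : 0 <= Normc.normc z.
Proof. by case: z => a b; rewrite /Normc.normc sqrtr_ge0. Qed.

Lemma normc_real (R : realType) (x : R) : Normc.normc (x%:C)%C = `|x|.
Proof. by rewrite /Normc.normc /= expr0n addr0 sqrtr_sqr. Qed.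

Lemma tz_crec (R : realType) (z : R[i]) (s : nat -> R[i]) :
  Normc.normc z < 1 -> tz (fun k => Normc.normc (s k.+1 - z * s k)) ->
  tz (fun k => Normc.normc (s k)).
Proof.
move=> z1 hr; apply: (tz_rec (q := Normc.normc z)) hr.
- by rewrite normc_ge0 z1.
- by move=> k; apply: normc_ge0.
move=> k; rewrite -Normc.normcM addrC.
by rewrite -{1}(subrK (z * s k) (s k.+1)) le_normcD.
Qed.

Lemma gen_tz (R : realType) n (Ac : 'M[R[i]]_n.+1) (rs : seq R[i]) :
  (forall z, z \in rs -> Normc.normc z < 1) ->
  (forall i j, tz (fun k =>
     Normc.normc ((horner_mx Ac (\prod_(z <- rs) ('X - z%:P)) *m Ac ^+ k) i j))) ->
  forall i j, tz (fun k => Normc.normc ((Ac ^+ k) i j)).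
Proof.
elim: rs => [|z rs IH] hz H.
  move=> i j; apply: (tz_le _ (H i j)) => k; by rewrite big_nil rmorph1 mul1mx.
apply: IH; first by move=> w hw; apply: hz; rewrite in_cons hw orbT.
pose Q := horner_mx Ac (\prod_(w <- rs) ('X - w%:P)).
have cQ : Ac *m Q = Q *m Ac by apply: comm_mx_horner.
have hQ : forall k, horner_mx Ac (\prod_(w <- z :: rs) ('X - w%:P)) *m Ac ^+ k
    = Q *m Ac ^+ k.+1 - z *: (Q *m Ac ^+ k).
  move=> k; rewrite big_cons rmorphM /= rmorphB /= horner_mx_X horner_mx_C.
  rewrite -/Q.
  have -> : (Ac - z%:M) * Q = (Ac - z%:M) *m Q by [].
  rewrite mulmxBl cQ mul_scalar_mx mulmxBl -scalemxAl -mulmxA exprS.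
  by [].
move=> i j; apply: (tz_crec (z := z)); first by apply: hz; rewrite mem_head.
apply: (tz_le _ (H i j)) => k; rewrite hQ.
have -> : forall (A B : 'M[R[i]]_n.+1), (A - z *: B) i j = A i j - z * B i j.
  by move=> A B; rewrite !mxE.
by [].
Qed.

Lemma map_mxXn (R : realType) n (A : 'M[R]_n.+1) k :
  map_mx (real_complex R) (A ^+ k) = (map_mx (real_complex R) A) ^+ k.
Proof.
elim: k => [|k IH]; first by rewrite !expr0 map_mx1.
by rewrite !exprS -!mulmxE map_mxM IH.
Qed.

Lemma le_sum_seq (R : realType) (T : eqType) (f : T -> R) (rs : seq T) z :
  (forall w, 0 <= f w) -> z \in rs -> f z <= \sum_(w <- rs) f w.
Proof.
move=> f0; elim: rs => [//|a rs IH]; rewrite in_cons big_cons.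
case/orP => [/eqP ->|/IH h]; first by rewrite lerDl sumr_ge0.
by rewrite (le_trans h) // lerDr.
Qed.

Lemma normcX (R : realType) (z : R[i]) k :
  Normc.normc (z ^+ k) = Normc.normc z ^+ k.
Proof.
elim: k => [|k IH]; first by rewrite !expr0 Normc.normc1.
by rewrite !exprS Normc.normcM IH.
Qed.

Lemma normc_sum (R : realType) (I : Type) (r : seq I) (F : I -> R[i]) :
  Normc.normc (\sum_(i <- r) F i) <= \sum_(i <- r) Normc.normc (F i).
Proof.
apply: (big_rec2 (fun x y => Normc.normc y <= x)); first by rewrite Normc.normc0.
by move=> i y1 y2 _ h; rewrite (le_trans (le_normcD _ _)) // lerD2l.
Qed.

Lemma char_roots (R : realType) n (A : 'M[R]_n.+1) :
  exists rs : seq R[i],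
    char_poly (map_mx (real_complex R) A) = \prod_(z <- rs) ('X - z%:P) /\
    forall z, eigenvalue (map_mx (real_complex R) A) z = (z \in rs).
Proof.
have [rs hrs] := closed_field_poly_normal (char_poly (map_mx (real_complex R) A)).
rewrite (monicP (char_poly_monic _)) scale1r in hrs.
exists rs; split => // z.
by rewrite eigenvalue_root_char hrs root_prod_XsubC.
Qed.

Lemma sl1 (R : realType) p (A : 'M[R]_p) :
  spectral_radius A < 1 -> forall i j, tz (fun k => `|(A ^+ k) i j|).
Proof.
case: p A => [|n] A hA; first by case.
have [rs [hrs heig]] := char_roots A.
set Ac := map_mx (real_complex R) A in hrs heig.
have hz1 : forall z, z \in rs -> Normc.normc z < 1.
  move=> z hz; apply: le_lt_trans hA.
  apply: sup_upper_bound; last by exists z => //=; rewrite heig.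
  split; first by exists (Normc.normc z); exists z => //=; rewrite heig.
  exists (\sum_(w <- rs) Normc.normc w) => _ [w /= hw <-].
  by apply: le_sum_seq; [exact: normc_ge0|rewrite -heig].
have := @gen_tz R n Ac rs hz1.
rewrite -hrs Cayley_Hamilton.
have H0 : forall i j : 'I_n.+1, tz (fun k => Normc.normc ((0 *m Ac ^+ k) i j)).
  move=> i j; apply: (@tz_le R (fun _ => 0)); last exact: tz_0.
  by move=> k; rewrite mul0mx mxE Normc.normc0.
move=> /(_ H0) H i j; apply: (tz_le _ (H i j)) => k.
by rewrite -map_mxXn mxE normc_real.
Qed.

Lemma eig_lt1 (R : realType) n (A : 'M[R]_n.+1) z :
  (forall i j, tz (fun k => `|(A ^+ k) i j|)) ->
  eigenvalue (map_mx (real_complex R) A) z -> Normc.normc z < 1.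
Proof.
move=> H /eigenvalueP [v hv v0].
set Ac := map_mx (real_complex R) A in hv.
have hk : forall k, v *m Ac ^+ k = z ^+ k *: v.
  elim=> [|k IH]; first by rewrite expr0 mulmx1 scale1r.
  by rewrite exprSr -mulmxE mulmxA IH -scalemxAl hv scalerA -exprSr.
case: (pickP (fun j => v 0 j != 0)) => [j vj|h]; last first.
  by case/eqP: v0; apply/rowP => j; rewrite mxE; move/negbFE: (h j) => /eqP.
have c0 : 0 < Normc.normc (v 0 j).
  rewrite lt_neqAle normc_ge0 andbT; apply/eqP => /esym/Normc.eq0_normc.
  by apply/eqP.
rewrite ltNge; apply/negP => z1.
have T : tz (fun k => \sum_(i < n.+1)
                        Normc.normc (v 0 i) * `|(A ^+ k) i j|).
  by apply: tz_sum => i; apply: tz_scale; [exact: normc_ge0|exact: H].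
have [N hN] := T _ (divr_gt0 c0 (ltr0n R 2)).
have := hN N (leqnn N).
apply/negP; rewrite -ltNge.
have -> : \sum_(i < n.+1) Normc.normc (v 0 i) * `|(A ^+ N) i j|
   = \sum_(i < n.+1) Normc.normc (v 0 i * (Ac ^+ N) i j).
  apply: eq_bigr => i _.
  by rewrite Normc.normcM /Ac -map_mxXn mxE normc_real.
have : Normc.normc (z ^+ N * v 0 j) <= \sum_(i < n.+1) Normc.normc (v 0 i * (Ac ^+ N) i j).
  have := congr1 (fun M : 'rV[R[i]]_n.+1 => M 0 j) (hk N); rewrite /= !mxE => <-.
  exact: normc_sum.
rewrite Normc.normcM normcX.
have : 1 <= Normc.normc z ^+ N by apply: exprn_ege1.
nra.
Qed.

Lemma bigmax_lt1 (R : realType) (T : eqType) (f : T -> R) (rs : seq T) :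
  (forall w, w \in rs -> f w < 1) -> \big[Num.max/0]_(w <- rs) f w < 1.
Proof.
elim: rs => [|a rs IH] hw; first by rewrite big_nil.
rewrite big_cons gt_max hw ?mem_head //= IH // => w hw'.
by apply: hw; rewrite in_cons hw' orbT.
Qed.

Lemma le_bigmax_seq (R : realType) (T : eqType) (f : T -> R) (rs : seq T) w :
  w \in rs -> f w <= \big[Num.max/0]_(w <- rs) f w.
Proof.
elim: rs => [//|a rs IH].
rewrite in_cons big_cons le_max; case/orP => [/eqP ->|/IH ->].
  by rewrite lexx.
by rewrite orbT.
Qed.

Lemma bigmax_ge0 (R : realType) (T : eqType) (f : T -> R) (rs : seq T) :
  0 <= \big[Num.max/0]_(w <- rs) f w.
Proof.
elim: rs => [|a r IH]; first by rewrite big_nil.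
by rewrite big_cons le_max IH orbT.
Qed.

Lemma sl2 (R : realType) p (A : 'M[R]_p) :
  (forall i j, tz (fun k => `|(A ^+ k) i j|)) -> spectral_radius A < 1.
Proof.
case: p A => [|n] A H.
  rewrite /spectral_radius.
  have -> : [set Normc.normc z | z in [set z | eigenvalue (map_mx (real_complex R) A) z]]
       = set0.
    apply/seteqP; split => // x [z /eigenvalueP [v _ v0] _].
    by move: v0; rewrite (thinmx0 v) eqxx.
  by rewrite sup0.
have [rs [_ heig]] := char_roots A.
have hw : forall w, w \in rs -> Normc.normc w < 1.
  by move=> w hw; apply: (eig_lt1 H); rewrite heig.
pose M := \big[Num.max/0]_(w <- rs) Normc.normc w.
have hM : M < 1 by apply: bigmax_lt1.
have hwM : forall w, w \in rs -> Normc.normc w <= M by move=> w; apply: le_bigmax_seq.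
apply: le_lt_trans hM.
rewrite /spectral_radius.
set S := [set _ | _ in _].
have [->|/set0P ne] := eqVneq S set0.
  by rewrite sup0 /M bigmax_ge0.
apply: ge_sup => // _ [w /= hw' <-]; apply: hwM; by rewrite -heig.
Qed.

Lemma cl_rec (R : realType) p m (P : 'M[R]_(p, m)) (K : 'M[R]_(m, p)) Yd N U0 k :
  cl_error P K Yd N U0 k.+1 =
  (1%:M - P *m K) *m cl_error P K Yd N U0 k - dseq N k.
Proof.
rewrite /cl_error /dseq /=.
set U := cl_input P K Yd N U0 k.
set E := Yd - (P *m U + N k).
rewrite mulmxDr mulmxA mulmxBl mul1mx.
rewrite /E; set a := P *m U; set b := N k; set c := N k.+1.
set d := P *m K *m (Yd - (a + b)).
rewrite !opprD !addrA opprK -[RHS]addrA [- c + b]addrC addrA.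
by rewrite (addrAC _ (- d) b) addrNK.
Qed.

Lemma cl_formula (R : realType) p m (P : 'M[R]_(p, m)) (K : 'M[R]_(m, p)) Yd N U0 J t :
  cl_error P K Yd N U0 (J + t) =
  (1%:M - P *m K) ^+ t *m cl_error P K Yd N U0 J -
  \sum_(j < t) (1%:M - P *m K) ^+ (t - j.+1) *m dseq N (J + j).
Proof.
set A := 1%:M - P *m K.
have sq : forall k, A *m A ^+ k = A ^+ k.+1 by move=> k; rewrite exprS.
elim: t => [|t IH]; first by rewrite addn0 expr0 mul1mx big_ord0 subr0.
rewrite addnS cl_rec -/A IH; set d := dseq N.
rewrite big_ord_recr /= subnn expr0 mul1mx.
rewrite mulmxBr mulmxA sq mulmx_sumr [in RHS]opprD addrA.
congr (_ - _ - _); apply: eq_bigr => j _.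
by rewrite mulmxA sq -subSn.
Qed.

Lemma geo_sum (R : realType) (lam : R) t :
  0 <= lam < 1 -> \sum_(j < t) lam ^+ (t - j.+1) <= (1 - lam)^-1.
Proof.
move=> /andP [l0 l1]; have l1' : 0 < 1 - lam by lra.
elim: t => [|t IH]; first by rewrite big_ord0 invr_ge0 ltW.
rewrite big_ord_recr /= subnn expr0.
have -> : \sum_(i < t) lam ^+ (t.+1 - (widen_ord (leqnSn t) i).+1)
        = lam * \sum_(j < t) lam ^+ (t - j.+1).
  rewrite mulr_sumr; apply: eq_bigr => j _ /=.
  by rewrite subSS -exprS -subSn.
have h := ler_wpM2l l0 IH.
have -> : (1 - lam)^-1 = lam * (1 - lam)^-1 + 1.
  by field; rewrite subr_eq0 eq_sym lt_eqF.
by rewrite lerD2r.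
Qed.

Lemma bern (R : realType) (x : R) m : 0 <= x <= 1 -> 1 - m%:R * x <= (1 - x) ^+ m.
Proof.
move=> /andP [x0 x1]; elim: m => [|m IH]; first by rewrite mul0r subr0 expr0.
rewrite exprSr.
have h : (1 - m%:R * x) * (1 - x) <= (1 - x) ^+ m * (1 - x).
  by apply: ler_wpM2r => //; lra.
apply: le_trans h; rewrite -natr1.
have : 0 <= m%:R * x * x by rewrite mulr_ge0 // mulr_ge0.
nra.
Qed.

Lemma geo_bound (R : realType) p (A : 'M[R]_p) :
  (forall i j, tz (fun k => `|(A ^+ k) i j|)) ->
  exists C lam : R, [/\ 0 < C, 0 < lam, lam < 1 &
    forall k, mm (A ^+ k) <= C * lam ^+ k].
Proof.
move=> H.
have T : tz (fun k => mm (A ^+ k)).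
  apply: (@tz_sum R _ _ (fun i k => \sum_j `|(A ^+ k) i j|)) => i.
  by apply: (@tz_sum R _ _ (fun j k => `|(A ^+ k) i j|)) => j.
have h2 : 0 < 1 / 2 :> R by lra.
have [N hN] := T (1 / 2) h2.
set n := N.+1.
have hn : mm (A ^+ n) <= 1 / 2 := hN n (leqnSn N).
have step : forall q r, mm (A ^+ (q * n + r)) <= (1 / 2) ^+ q * mm (A ^+ r).
  elim=> [|q IH] r; first by rewrite mul0n add0n expr0 mul1r.
  rewrite mulSn -addnA exprD.
  apply: (le_trans (mmM (A ^+ n) (A ^+ (q * n + r)))).
  rewrite exprS -mulrA; apply: ler_pM => //; [exact: mm_ge0|exact: mm_ge0].
pose G := \sum_(r < n) mm (A ^+ r).
have G0 : 0 <= G by apply: sumr_ge0 => r _; exact: mm_ge0.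
have hG : forall r, (r < n)%N -> mm (A ^+ r) <= G.
  move=> r hr; rewrite /G.
  apply: (@le_sum_seq R _ (fun r : 'I_n => mm (A ^+ r)) _ (Ordinal hr)).
    by move=> w; apply: mm_ge0.
  by rewrite mem_index_enum.
have n1 : 1 <= n%:R :> R by rewrite ler1n.
pose lam : R := 1 - (2 * n%:R)^-1.
have hx : 0 < (2 * n%:R)^-1 :> R by rewrite invr_gt0; lra.
have hx1 : (2 * n%:R)^-1 <= 1 / 2 :> R.
  have : (2 * n%:R)^-1 * (2 * n%:R) = 1 :> R by field; lra.
  nra.
have l0 : 0 < lam by rewrite /lam; lra.
have l1 : lam < 1 by rewrite /lam; lra.
have ln : 1 / 2 <= lam ^+ n.
  apply: le_trans (bern n _); last by apply/andP; split; lra.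
  have -> : n%:R * (2 * n%:R)^-1 = 1 / 2 :> R.
    by field; lra.
  lra.
exists (2 * G + 1), lam; split => //; first by lra.
move=> k; rewrite (divn_eq k n); set q := (k %/ n)%N; set r := (k %% n)%N.
have hr : (r < n)%N by apply: ltn_pmod.
have e1 : (1 / 2) ^+ q <= 2 * lam ^+ (q * n + r).
  have a1 : lam ^+ (n * q.+1) <= lam ^+ (q * n + r).
    apply: ler_wiXn2l; [exact: ltW|exact: ltW|].
    by move: hr; rewrite mulnS; lia.
  have a2 : (1 / 2) ^+ q.+1 <= lam ^+ (n * q.+1).
    rewrite exprM; apply: lerXn2r => //; rewrite nnegrE; first by lra.
    by rewrite exprn_ge0 // ltW.
  have a3 : (1 / 2 : R) ^+ q = 2 * (1 / 2) ^+ q.+1.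
    by rewrite exprS mulrA mul1r divff ?mul1r // pnatr_eq0.
  rewrite a3; apply: ler_wpM2l => //; exact: le_trans a2 a1.
apply: (le_trans (step q r)).
have b0 : 0 <= lam ^+ (q * n + r) by rewrite exprn_ge0 // ltW.
have a0 : 0 <= (1 / 2 : R) ^+ q by rewrite exprn_ge0 //; lra.
have := hG r hr; have := mm_ge0 (A ^+ r).
nra.
Qed.

Lemma err_bound (R : realType) p m (P : 'M[R]_(p, m)) (K : 'M[R]_(m, p)) Yd N U0
  (C lam : R) : 0 < C -> 0 <= lam < 1 ->
  (forall k, mm ((1%:M - P *m K) ^+ k) <= C * lam ^+ k) ->
  forall J t D, (forall j, mm (dseq N (J + j)) <= D) ->
  mm (cl_error P K Yd N U0 (J + t)) <=
    C * lam ^+ t * mm (cl_error P K Yd N U0 J) + C / (1 - lam) * D.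
Proof.
move=> C0 hl hA J t D hD.
have D0 : 0 <= D := le_trans (mm_ge0 _) (hD 0%N).
rewrite cl_formula; set A := 1%:M - P *m K.
rewrite (le_trans (mmD _ _)) // mmN lerD //.
  by rewrite (le_trans (mmM _ _)) // ler_wpM2r ?mm_ge0.
rewrite (le_trans (mm_sum _ _)) //.
apply: (@le_trans _ _ (\sum_(j < t) C * lam ^+ (t - j.+1) * D)).
  apply: ler_sum => j _; rewrite (le_trans (mmM _ _)) //.
  apply: ler_pM; [exact: mm_ge0|exact: mm_ge0|exact: hA|exact: hD].
rewrite -mulr_suml -mulr_sumr.
case/andP: hl => l0 l1.
have S0 : 0 <= \sum_(i < t) lam ^+ (t - i.+1).
  by apply: sumr_ge0 => i _; apply: exprn_ge0.
apply: ler_pM => //; first by apply: mulr_ge0 => //; exact: ltW.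
apply: ler_pM => //; first exact: ltW.
by apply: geo_sum; rewrite l0 l1.
Qed.

Lemma lin_K (R : realType) (f : R -> R) (a : R) :
  0 < a -> (forall r, f r = a * r) -> class_K f.
Proof.
move=> a0 hf; have -> : f = (fun r => a * r) by apply: funext.
split; last by move=> x y _ xy; rewrite ltr_pM2l.
  apply: continuous_subspaceT => x.
  by apply: cvgMl_tmp; exact: cvg_id.
by rewrite mulr0.
Qed.

Lemma lin_Kinf (R : realType) (a : R) : 0 < a -> class_Kinf (fun r => a * r).
Proof.
move=> a0; split; first exact: (lin_K a0 (fun r => erefl)).
move=> M; exists ((`|M| + 1) / a); split.
  by rewrite divr_ge0 // ?addr_ge0 // ltW.
rewrite mulrC divfK ?gt_eqF //.
by apply: le_lt_trans (ler_norm M) _; rewrite ltrDl.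
Qed.

Lemma geo_KL (R : realType) (c lam : R) :
  0 < c -> 0 < lam -> lam < 1 -> class_KL (fun r k => c * r * lam ^+ k).
Proof.
move=> c0 l0 l1; split.
  move=> k; apply: (lin_K (a := c * lam ^+ k)).
    by rewrite mulr_gt0 // exprn_gt0.
  by move=> r; rewrite mulrAC.
move=> r r0; split.
  move=> k; have h3 : 0 <= c * r * lam ^+ k.
    by rewrite !mulr_ge0 // ?exprn_ge0 // ltW.
  rewrite exprS; nra.
rewrite -(mulr0 (c * r)); apply: cvgMl_tmp; apply: cvg_expr.
by rewrite ger0_norm // ltW.
Qed.

Lemma attract (R : realType) p m (nu : 'cV[R]_p -> R) (P : 'M[R]_(p, m))
  (K : 'M[R]_(m, p)) Yd N U0 (C lam c1 c2 : R) :
  is_vnorm nu -> 0 < C -> 0 < lam -> lam < 1 -> 0 < c1 -> 0 < c2 ->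
  (forall k, mm ((1%:M - P *m K) ^+ k) <= C * lam ^+ k) ->
  (forall x, mm x <= c1 * nu x) -> (forall x, nu x <= c2 * mm x) ->
  bounded_seq nu N ->
  (limn_esup (fun k => (nu (cl_error P K Yd N U0 k))%:E) <=
    ((c2 * C / (1 - lam) * c1) * beta_ess_dN nu N)%:E)%E.
Proof.
move=> hnu C0 l0 l1 c10 c20 hA hlow hup [M hM].
have l1' : 0 < 1 - lam by lra.
set a := c2 * C / (1 - lam) * c1.
have a0 : 0 < a by rewrite /a !mulr_gt0 // invr_gt0.
have [nu_ge0 _ _ hD] := hnu.
have hdM : forall k, nu (dseq N k) <= M + M.
  move=> k; rewrite /dseq (le_trans (hD _ _)) // nuN // lerD //.
set u := fun k => (nu (dseq N k))%:E.
set L := limn_esup u.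
have Lub : (L <= (M + M)%:E)%E.
  apply: (@le_trans _ _ (ereal_sup (u @` setT))).
    by apply: ereal_inf_lbound; exists setT => //; exact: filterT.
  apply: (@ge_ereal_sup R (range u) (M + M)%:E) => _ [k _ <-].
  by rewrite /u lee_fin.
have Llb : (0 <= L)%E.
  apply: le_ereal_inf_tmp => _ [V hV <-]; case: hV => J _ hJ.
  apply: ereal_sup_ge; exists (u J).
    by exists J => //; apply: hJ => /=.
  by rewrite /u lee_fin.
have Lfin : L \is a fin_num.
  by rewrite ge0_fin_numE // (le_lt_trans Lub) // ltry.
have hb : L = (beta_ess_dN nu N)%:E by rewrite /beta_ess_dN -/u -/L fineK.
set b := beta_ess_dN nu N in hb *.
set E := cl_error P K Yd N U0.
apply/lee_addgt0Pr => e e0.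
have a1 : 0 < a + 1 by lra.
set e' := e / (a + 1).
have e'0 : 0 < e' by rewrite divr_gt0.
have [J hJ] : exists J, forall k, (J <= k)%N -> nu (dseq N k) <= b + e'.
  have : (L < (b + e')%:E)%E by rewrite hb lte_fin ltrDl.
  rewrite {1}/L /limn_esup /limf_esup => /ereal_inf_lt [_ [V hV <-]] hlt.
  case: hV => J _ hJ; exists J => k hk; rewrite -lee_fin.
  apply: le_trans (ltW hlt); apply: ereal_sup_ubound; exists k => //.
  exact: hJ.
have hbnd : forall t, nu (E (J + t)%N) <=
    c2 * C * mm (E J) * lam ^+ t + a * (b + e').
  move=> t.
  have hd : forall j, mm (dseq N (J + j)) <= c1 * (b + e').
    move=> j; apply: le_trans (hlow _) _; apply: ler_wpM2l; first exact: ltW.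
    exact/hJ/leq_addr.
  have hl : 0 <= lam < 1 by rewrite (ltW l0) l1.
  have h := @err_bound R p m P K Yd N U0 C lam C0 hl hA J t _ hd.
  apply: le_trans (hup _) _.
  apply: le_trans (ler_wpM2l (ltW c20) h) _.
  rewrite le_eqVlt; apply/orP; left; apply/eqP; rewrite /a; field; lra.
have hg : tz (fun t => c2 * C * mm (E J) * lam ^+ t).
  apply: tz_scale; first by rewrite !mulr_ge0 ?mm_ge0 // ltW.
  by apply: tz_geom; rewrite (ltW l0) l1.
have [T hT] := hg e' e'0.
apply: (@le_trans _ _ (ereal_sup ((fun k => (nu (E k))%:E) @` [set k | (J + T <= k)%N]))).
  by apply: ereal_inf_lbound; exists [set k | (J + T <= k)%N] => //; exists (J + T)%N.
apply: (@ge_ereal_sup R _ _) => _ [k /= hk <-].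
rewrite -EFinD lee_fin.
have -> : k = (J + (k - J))%N by rewrite subnKC // (leq_trans (leq_addr T J)).
apply: le_trans (hbnd _) _.
have : (T <= k - J)%N by rewrite leq_subRL // (leq_trans (leq_addr T J)).
move=> /hT h.
have -> : a * b + e = a * (b + e') + e' by rewrite /e'; field; lra.
lra.
Qed.


Unset Implicit Arguments.

Theorem theorem1 (R : realType) (p m : nat) (nu : 'cV[R]_p -> R)
  (P : 'M[R]_(p, m)) (K : 'M[R]_(m, p)) (Yd : 'cV[R]_p) :
  is_vnorm nu ->
  (robustly_k_stable nu P K Yd <-> spectral_radius (1%:M - P *m K) < 1).
Proof.
move=> hnu.
have [c1 c1p hlow] := nu_lower hnu.
have [c2 c2p hup] := nu_upper hnu.
split.
  case=> chi1 [chi2 [zeta [hchi1 hchi2 hzeta hmain]]].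
  apply: sl2 => i j.
  pose x : 'cV[R]_p := delta_mx j 0.
  pose Nc := fun _ : nat => Yd - x.
  have hb : bounded_seq nu Nc by exists (nu (Yd - x)).
  have [b0 [b00 [hbd _]]] := hmain 0 Nc hb.
  have hd : forall k, dseq Nc k = 0 by move=> k; rewrite /dseq subrr.
  have hE : forall k, cl_error P K Yd Nc 0 k = (1%:M - P *m K) ^+ k *m x.
    move=> k; have := @cl_formula R p m P K Yd Nc 0 0%N k; rewrite add0n => ->.
    rewrite big1 ?subr0; last by move=> l _; rewrite hd mulmx0.
    by rewrite /cl_error /= mulmx0 add0r /Nc opprB addrCA subrr addr0.
  have hbeta : beta_dN nu Nc = 0.
    rewrite /beta_dN.
    have -> : range (fun k => nu (dseq Nc k)) = [set 0].
      apply/seteqP; split => [_ [l _ <-]|_ ->]; first by rewrite /= hd nu0.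
      by exists 0%N => //; rewrite hd nu0.
    exact: sup1.
  have [[_ chi0 _] _] := hchi1.
  have [_ hz] := hzeta; have [_ hcv] := hz b0 b00.
  have tzz := tz_cvg hcv.
  apply: (tz_le _ (tz_scale (ltW c1p) tzz)) => k.
  have -> : ((1%:M - P *m K) ^+ k) i j = (((1%:M - P *m K) ^+ k) *m x) i 0.
    by rewrite -colE mxE.
  apply: le_trans (mm_entry _ _ _) _; rewrite -hE.
  apply: le_trans (hlow _) _; apply: ler_wpM2l; first exact: ltW.
  by apply: le_trans (hbd k) _; rewrite hbeta chi0 add0r.
move=> hrho.
have [C [lam [C0 l0 l1 hA]]] := geo_bound (sl1 hrho).
have l1' : 0 < 1 - lam by lra.
pose a := c2 * C / (1 - lam) * c1.
have a0 : 0 < a by rewrite /a !mulr_gt0 // invr_gt0.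
exists (fun r => a * r), (fun r => a * r), (fun r k => c2 * C * r * lam ^+ k).
split; [exact: lin_Kinf|exact: lin_Kinf|apply: geo_KL => //; exact: mulr_gt0|].
move=> U0 N hN.
set E := cl_error P K Yd N U0.
exists (mm (E 0%N)); split; first exact: mm_ge0.
split; last by apply: attract.
have [M hM] := hN.
have [nu_ge0 _ _ hD] := hnu.
have hdM : forall k, nu (dseq N k) <= M + M.
  move=> k; rewrite /dseq (le_trans (hD _ _)) // nuN // lerD //.
have hsup : has_sup (range (fun k => nu (dseq N k))).
  split; first by exists (nu (dseq N 0)); exists 0%N.
  by exists (M + M) => _ [k _ <-].
have hdb : forall k, nu (dseq N k) <= beta_dN nu N.
  by move=> k; apply: sup_upper_bound => //; exists k.
move=> k.
have hd : forall j, mm (dseq N (0 + j)) <= c1 * beta_dN nu N.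
  move=> j; apply: le_trans (hlow _) _; apply: ler_wpM2l; first exact: ltW.
  exact: hdb.
have hl : 0 <= lam < 1 by rewrite (ltW l0) l1.
have h := @err_bound R p m P K Yd N U0 C lam C0 hl hA 0%N k _ hd.
rewrite add0n in h.
apply: le_trans (hup _) _.
apply: le_trans (ler_wpM2l (ltW c2p) h) _.
rewrite le_eqVlt; apply/orP; left; apply/eqP; rewrite /a /E; field; lra.
Qed.
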